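(* For every $n\ge5$ and every integer $t$ with $n-2\le t\le \frac{n^2}{8}+\frac{n}{4}-\frac{11}{8}$, there exists an $(n,t)$-blocker.
   Context: For a convex $n$-gon: an edge is a segment between two vertices; diagonals are edges that are not sides of the polygon. Two edges cross if they share an interior point. A triangulation is a maximal set of pairwise non-crossing diagonals. A blocker is a set $B$ of diagonals having a diagonal in common with every triangulation; it is saturated if for every $e\in B$, $B\setminus\{e\}$ is not a blocker. An $(n,t)$-blocker is a saturated blocker of size $t$ for a convex $n$-gon. *)

(* Defs.v *)
(* Convex n-gon modelled combinatorially: vertices are
   'I_n in cyclic (convex-position) order. *)
From mathcomp Require Import all_boot all_order.
Set Implicit Arguments. Unset Strict Implicit. Unset Printing Implicit Defensive.

(* An edge {i,j} is represented by the ordered pair (i,j) with i < j. *)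
Definition edge n := ('I_n * 'I_n)%type.

(* Diagonal: an edge (i,j), i<j, that is not a side of the polygon, i.e.
   j <> i+1 and (i,j) <> (0,n-1). *)
Definition is_diag n (e : edge n) : bool :=
  [&& (e.1 < e.2)%N, (e.1.+1 < e.2)%N & ~~ ((e.1 == 0 :> nat) && (e.2 == n.-1 :> nat))].

(* Two distinct diagonals of a convex polygon share an interior point iff
   their endpoints strictly interleave. *)
Definition cross n (e f : edge n) : bool :=
  [|| [&& (e.1 < f.1)%N, (f.1 < e.2)%N & (e.2 < f.2)%N]
    | [&& (f.1 < e.1)%N, (e.1 < f.2)%N & (f.2 < e.2)%N]].

Definition noncrossing n (S : {set edge n}) : Prop :=
  forall e f, e \in S -> f \in S -> ~~ cross e f.

Definition triangulation n (T : {set edge n}) : Prop :=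
  [/\ (forall e, e \in T -> is_diag e),
      noncrossing T &
      forall d, is_diag d -> d \notin T -> ~ noncrossing (d |: T)].

Definition blocker n (B : {set edge n}) : Prop :=
  (forall e, e \in B -> is_diag e) /\
  forall T, triangulation T -> exists e, (e \in B) && (e \in T).

Definition saturated_blocker n (B : {set edge n}) : Prop :=
  blocker B /\ forall e, e \in B -> ~ blocker (B :\ e).

Definition nt_blocker n t (B : {set edge n}) : Prop :=
  saturated_blocker B /\ #|B| = t.

(* Main.v *)
Require Import Defs.
From mathcomp Require Import all_boot all_order.
From mathcomp Require Import zify.
From Stdlib Require Import Classical.
Set Implicit Arguments. Unset Strict Implicit. Unset Printing Implicit Defensive.

Definition diagN n (a b : nat) :=
  [&& (a < b)%N, (a.+1 < b)%N & ~~ ((a == 0) && (b == n))].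
Definition crossN (a b c d : nat) :=
  [|| [&& (a < c)%N, (c < b)%N & (b < d)%N] | [&& (c < a)%N, (a < d)%N & (d < b)%N]].

Lemma is_diagE n (e : edge n.+1) : is_diag e = diagN n e.1 e.2. Proof. by []. Qed.
Lemma crossE n (e f : edge n.+1) : cross e f = crossN e.1 e.2 f.1 f.2. Proof. by []. Qed.

Definition mk n (a b : nat) : edge n.+1 := (inord a, inord b).
Lemma mk1 n a b : a <= n -> (mk n a b).1 = a :> nat. Proof. by move=> h; rewrite /= inordK. Qed.
Lemma mk2 n a b : b <= n -> (mk n a b).2 = b :> nat. Proof. by move=> h; rewrite /= inordK. Qed.
Lemma mk_eta n (e : edge n.+1) : e = mk n e.1 e.2.
Proof. by case: e => a b; rewrite /mk !inord_val. Qed.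
Lemma edge_eq n (e f : edge n.+1) : e.1 = f.1 :> nat -> e.2 = f.2 :> nat -> e = f.
Proof. by case: e f => a b [c d] /= /val_inj-> /val_inj->. Qed.

Lemma tri_max n (T : {set edge n}) g : triangulation T -> is_diag g -> g \notin T ->
  exists f, f \in T /\ (cross g f || cross f g).
Proof.
case=> _ nc mx dg gT.
have H := mx g dg gT.
apply: NNPP => nex; apply: H => e f.
rewrite !in_setU1 => /orP[/eqP-> | eT] /orP[/eqP-> | fT].
- by rewrite /cross; lia.
- by apply/negP => c; apply: nex; exists f; rewrite c.
- by apply/negP => c; apply: nex; exists e; rewrite c orbT.
- exact: nc.
Qed.

Lemma extend n (S : {set edge n}) : (forall e, e \in S -> is_diag e) -> noncrossing S ->
  exists T, triangulation T /\ S \subset T.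
Proof.
have [k Hk] : exists k, #|~: S| <= k by exists #|~: S|.
elim: k S Hk => [|k IH] S Hk Sd Snc.
- case: (classic (exists d, [/\ is_diag d, d \notin S & noncrossing (d |: S)])).
    case=> d [dd dS _]; exfalso.
    have dC : d \in ~: S by rewrite inE.
    have : 0 < #|~: S| by apply/card_gt0P; exists d.
    lia.
  move=> nex; exists S; split => //; split => // d dd dS nc.
  by apply: nex; exists d.
- case: (classic (exists d, [/\ is_diag d, d \notin S & noncrossing (d |: S)])).
    case=> d [dd dS nc].
    case: (IH (d |: S)).
    + have pr : ~: (d |: S) \proper ~: S.
        rewrite -properC !setCK; apply/properP; split.
          by apply/subsetP => x xS; apply: setU1r.
        by exists d; [exact: setU11 | exact: dS].
      by rewrite -ltnS; apply: leq_trans (proper_card pr) Hk.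
    + by move=> e; rewrite in_setU1 => /orP[/eqP->|/Sd].
    + exact: nc.
    move=> T [tT sT]; exists T; split => //.
    by apply: subset_trans sT; apply/subsetP => x xS; rewrite in_setU1 xS orbT.
  move=> nex; exists S; split => //; split => // d dd dS nc.
  by apply: nex; exists d.
Qed.

Lemma sat_tool n (B : {set edge n.+1}) (g : edge n.+1) (L : seq (nat*nat)) :
  all (fun ab => (ab.1 <= n) && (ab.2 <= n)) L ->
  all (fun ab => all (fun cd => diagN n ab.1 ab.2 ==> diagN n cd.1 cd.2 ==>
                         ~~ crossN ab.1 ab.2 cd.1 cd.2) L) L ->
  (forall u w : nat, u <= n -> w <= n -> diagN n u w -> mk n u w \in B ->
     all (fun ab => diagN n ab.1 ab.2 ==> ~~ crossN u w ab.1 ab.2 && ~~ crossN ab.1 ab.2 u w) L ->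
     (u == g.1) && (w == g.2)) ->
  ~ blocker (B :\ g).
Proof.
move=> Hb Hnc Hk [_ Hbl].
pose S := [set e : edge n.+1 | is_diag e &&
             has (fun ab => (e.1 == ab.1 :> nat) && (e.2 == ab.2 :> nat)) L].
have Sd : forall e, e \in S -> is_diag e by move=> e; rewrite inE => /andP[].
have Sm : forall e, e \in S -> exists2 ab, ab \in L & (e.1 = ab.1 :> nat) /\ (e.2 = ab.2 :> nat).
  move=> e; rewrite inE => /andP[_ /hasP[ab abL /andP[/eqP h1 /eqP h2]]]; by exists ab.
have Snc : noncrossing S.
  move=> e f eS fS.
  have de := Sd e eS; have df := Sd f fS.
  case: (Sm e eS) => ab abL [e1 e2]; case: (Sm f fS) => cd cdL [f1 f2].
  have := allP (allP Hnc ab abL) cd cdL.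
  by rewrite crossE -e1 -e2 -f1 -f2 -!is_diagE de df.
case: (extend Sd Snc) => T [[Td Tnc Tmx] ST].
case: (Hbl T (And3 Td Tnc Tmx)) => e /andP[]; rewrite in_setD1 => /andP[eg eB] eT.
have de := Td e eT.
have h1 : e.1 <= n := ltn_ord e.1.
have h2 : e.2 <= n := ltn_ord e.2.
suff /andP[/eqP u1 /eqP u2] : (e.1 == g.1 :> nat) && (e.2 == g.2 :> nat).
  by move: eg; rewrite (edge_eq u1 u2) eqxx.
apply: (Hk e.1 e.2 h1 h2 de); first by rewrite -mk_eta.
  apply/allP => ab abL; apply/implyP => dab.
  have := allP Hb ab abL => /andP[b1 b2].
  have fS : mk n ab.1 ab.2 \in S.
    rewrite inE is_diagE mk1 // mk2 // dab /=.
    by apply/hasP; exists ab => //; rewrite !eqxx.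
  have fT := subsetP ST _ fS.
  have c1 := Tnc e _ eT fT; have c2 := Tnc _ e fT eT.
  by rewrite !crossE mk1 // mk2 // in c1 c2; rewrite c1 c2.
Qed.


Definition inB p s c (u w : nat) : bool :=
 [|| [&& 0 < u, u <= c & s < w], [&& c < u, u <= p, p.+1 < w & w <= s],
     [&& u == 0, p.+1 < w & w <= s] | [&& u == p.+1 & s < w]].
Definition Bs n p s c : {set edge n.+1} := [set e : edge n.+1 | inB p s c e.1 e.2].

Definition hidden (P : Prop) : Prop := P.
Lemma hideI (P : Prop) : P -> hidden P. Proof. by []. Qed.

Ltac splitall := repeat (apply/andP; split).
Tactic Notation "useF" ident(HL) constr(ab) :=
  let H := fresh "H" in
  have H := allP HL ab (ltac:(by rewrite !inE eqxx ?orbT)); move: H; rewrite /= /diagN /crossN => H.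
Ltac fin := by apply/andP; split; apply/eqP; lia.

Lemma Bs_sat n p s c : p.+2 <= s -> s < n -> c <= p ->
  forall e : edge n.+1, e \in Bs n p s c -> ~ blocker (Bs n p s c :\ e).
Proof.
move=> hps hsn hcp e; rewrite inE => eB.
have h1 : e.1 <= n := ltn_ord e.1.
have h2 : e.2 <= n := ltn_ord e.2.
case/or4P: eB => Hc.
- apply: (sat_tool (L := [:: (0, nat_of_ord e.1); (0, nat_of_ord e.2); (nat_of_ord e.1, nat_of_ord e.2);
     (nat_of_ord e.1, s); (s, nat_of_ord e.2); (nat_of_ord e.1, p.+1); (p.+1, s)])).
  + rewrite /=; splitall; lia.
  + rewrite /= /diagN /crossN; splitall; lia.
  + move=> u w hu hw d; rewrite inE mk1 // mk2 // => hB /hideI HL.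
    move: d; rewrite /diagN => d.
    case/or4P: hB => hB.
    * have a1 : e.1 <= u by useF HL (0, nat_of_ord e.1); lia.
      have a2 : u <= e.1 by useF HL (nat_of_ord e.1, p.+1); lia.
      have a3 : w <= e.2 by useF HL (0, nat_of_ord e.2); lia.
      have a4 : e.2 <= w by useF HL (s, nat_of_ord e.2); lia.
      fin.
    * by useF HL (nat_of_ord e.1, p.+1); lia.
    * by useF HL (nat_of_ord e.1, nat_of_ord e.2); lia.
    * have a1 : w <= e.2 by useF HL (nat_of_ord e.1, nat_of_ord e.2); lia.
      have a2 : e.2 <= w by useF HL (s, nat_of_ord e.2); lia.
      by useF HL (nat_of_ord e.1, s); lia.
- apply: (sat_tool (L := [:: (0, nat_of_ord e.1); (0, s.+1); (nat_of_ord e.1, s.+1); (nat_of_ord e.1, nat_of_ord e.2);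
     (nat_of_ord e.2, s.+1); (nat_of_ord e.1, p.+1); (p.+1, nat_of_ord e.2)])).
  + rewrite /=; splitall; lia.
  + rewrite /= /diagN /crossN; splitall; lia.
  + move=> u w hu hw d; rewrite inE mk1 // mk2 // => hB /hideI HL.
    move: d; rewrite /diagN => d.
    case/or4P: hB => hB.
    * by useF HL (0, nat_of_ord e.1); lia.
    * have a1 : e.1 <= u by useF HL (0, nat_of_ord e.1); lia.
      have a2 : u <= e.1 by useF HL (nat_of_ord e.1, p.+1); lia.
      have a3 : e.2 <= w by useF HL (p.+1, nat_of_ord e.2); lia.
      have a4 : w <= e.2 by useF HL (nat_of_ord e.2, s.+1); lia.
      fin.
    * by useF HL (nat_of_ord e.1, s.+1); lia.
    * have a1 : w <= s.+1 by useF HL (0, s.+1); lia.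
      by useF HL (nat_of_ord e.1, nat_of_ord e.2); lia.
- apply: (sat_tool (L := [:: (0, p.+1); (0, nat_of_ord e.2); (p.+1, nat_of_ord e.2); (nat_of_ord e.2, n)])).
  + rewrite /=; splitall; lia.
  + rewrite /= /diagN /crossN; splitall; lia.
  + move=> u w hu hw d; rewrite inE mk1 // mk2 // => hB /hideI HL.
    move: d; rewrite /diagN => d.
    case/or4P: hB => hB.
    * by useF HL (0, p.+1); lia.
    * by useF HL (0, p.+1); lia.
    * have a1 : e.2 <= w by useF HL (p.+1, nat_of_ord e.2); lia.
      have a2 : w <= e.2 by useF HL (nat_of_ord e.2, n); lia.
      fin.
    * by useF HL (0, nat_of_ord e.2); lia.
- apply: (sat_tool (L := [:: (0, p.+1); (0, nat_of_ord e.2); (p.+1, nat_of_ord e.2); (p.+2, nat_of_ord e.2)])).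
  + rewrite /=; splitall; lia.
  + rewrite /= /diagN /crossN; splitall; lia.
  + move=> u w hu hw d; rewrite inE mk1 // mk2 // => hB /hideI HL.
    move: d; rewrite /diagN => d.
    case/or4P: hB => hB.
    * by useF HL (0, p.+1); lia.
    * by useF HL (0, p.+1); lia.
    * by useF HL (p.+1, nat_of_ord e.2); lia.
    * have a1 : w <= e.2 by useF HL (0, nat_of_ord e.2); lia.
      have a2 : e.2 <= w by useF HL (p.+2, nat_of_ord e.2); lia.
      fin.
Qed.


Lemma Bs_diag n p s c : p.+2 <= s -> s < n -> c <= p ->
  forall e : edge n.+1, e \in Bs n p s c -> is_diag e.
Proof.
move=> hps hsn hcp e; rewrite inE is_diagE /inB /diagN.
have := ltn_ord e.2; lia.
Qed.

Ltac genf f := generalize dependent f; intros [?a ?b]; simpl; intros;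
  match goal with |- _ => idtac end;
  repeat match goal with | x : ordinal _ |- _ => have := ltn_ord x; move: x; intros end.

Ltac tlia T := repeat match goal with
  | X : context[T] |- _ => clear X
  | X : forall _, _ |- _ => clear X
  | X : ex _ |- _ => clear X
  | X := _ |- _ => clear X
  end;
  repeat match goal with e : _ |- _ => let _ := constr:(e.1) in genf e end;
  lia.
Ltac plia := repeat match goal with e : _ |- _ => let _ := constr:(e.1) in genf e end; lia.

Lemma Bs_blocker n p s c : p.+2 <= s -> s < n -> c <= p ->
  forall T : {set edge n.+1}, triangulation T -> exists e, (e \in Bs n p s c) && (e \in T).
Proof.
move=> hps hsn hcp T trT.
case: (trT) => Td Tnc _.
apply: NNPP => nE.
have H : forall e, e \in T -> ~~ inB p s c e.1 e.2.
  move=> e eT; apply/negP => eB; apply: nE; exists e; by rewrite inE eB eT.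
have dT : forall f, f \in T -> diagN n f.1 f.2 := fun f fT => Td f fT.
have ltf : forall f : edge n.+1, f.1 <= n /\ f.2 <= n.
  by move=> f; split; [exact: (ltn_ord f.1) | exact: (ltn_ord f.2)].
have key : forall a b, a <= n -> b <= n -> diagN n a b -> mk n a b \notin T ->
    exists f, f \in T /\ (crossN a b f.1 f.2 || crossN f.1 f.2 a b).
  move=> a b ha hb dab nin.
  case: (tri_max (g := mk n a b) trT _ nin); first by rewrite is_diagE mk1 // mk2.
  by move=> f [fT cf]; exists f; split => //; rewrite !crossE mk1 // mk2 // in cf.
have inBT : forall a b, a <= n -> b <= n -> inB p s c a b -> mk n a b \notin T.
  move=> a b ha hb hB; apply/negP => mT; have := H _ mT; by rewrite mk1 // mk2 // hB.
have ncmk : forall a b f, a <= n -> b <= n -> mk n a b \in T -> f \in T ->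
    ~~ crossN a b f.1 f.2 && ~~ crossN f.1 f.2 a b.
  move=> a b f ha hb mT fT.
  have c1 := Tnc _ _ mT fT; have c2 := Tnc _ _ fT mT.
  by rewrite !crossE mk1 // mk2 // in c1 c2; rewrite c1 c2.
case: (boolP ((mk n 0 p.+1 \in T) || ~~ diagN n 0 p.+1)) => okd.
- pose P z := (p.+1 < z <= n) && ((mk n 0 z \in T) || ~~ diagN n 0 z).
  have exP : exists z, P z.
    by exists n; rewrite /P /diagN; apply/andP; split; [tlia T | apply/orP; right; tlia T].
  case: (ex_minnP exP) => z0 /andP[rz okz] minz.
  have okb : (mk n p.+1 z0 \in T) || ~~ diagN n p.+1 z0.
    case: (boolP (mk n p.+1 z0 \in T)) => //= nin; apply/negP => dg.
    have hp1 : p.+1 <= n by tlia T.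
    have hz0 : z0 <= n by tlia T.
    case: (key _ _ hp1 hz0 dg nin) => f [fT cf].
    have df := dT f fT. case: (ltf f) => f1 f2.
    have c1 : ~~ diagN n 0 z0 \/ ~~ crossN 0 z0 f.1 f.2.
      case/orP: okz => [zT|]; last by left.
      by right; case/andP: (ncmk _ _ _ (leq0n n) hz0 zT fT).
    have c2 : ~~ diagN n 0 p.+1 \/ ~~ crossN 0 p.+1 f.1 f.2.
      case/orP: okd => [zT|]; last by left.
      by right; case/andP: (ncmk _ _ _ (leq0n n) hp1 zT fT).
    have [u0 wr] : f.1 = 0 :> nat /\ p.+1 < f.2 < z0.
      move: cf c1 c2 df; rewrite /diagN /crossN => cf c1 c2 df; genf f; tlia T.
    have ef : mk n 0 f.2 = f.
      by apply: edge_eq; [rewrite mk1 //; apply/esym; exact: u0 | rewrite mk2 //].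
    have : P f.2 by rewrite /P ef fT orTb andbT; tlia T.
    by move/minz; tlia T.
  have hz0 : z0 <= n by tlia T.
  case: (leqP z0 s) => hz.
  + have iB : inB p s c 0 z0 by rewrite /inB; tlia T.
    have := inBT 0 z0 (leq0n n) hz0 iB.
    case/orP: okz => [zT|nd]; first by rewrite zT.
    by move: nd; rewrite /diagN => nd; tlia T.
  + have hp1 : p.+1 <= n by tlia T.
    have iB : inB p s c p.+1 z0 by rewrite /inB; tlia T.
    have := inBT p.+1 z0 hp1 hz0 iB.
    case/orP: okb => [zT|nd]; first by rewrite zT.
    by move: nd; rewrite /diagN => nd; tlia T.
- rewrite negb_or negbK in okd; case/andP: okd => nind dd.
  have hp1 : p.+1 <= n by tlia T.
  case: (key _ _ (leq0n n) hp1 dd nind) => f0 [f0T cf0].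
  have df0 := dT f0 f0T.
  have rf0 : [&& 0 < f0.1, f0.1 <= p & p.+1 < f0.2].
    by move: cf0 df0; rewrite /diagN /crossN => cf0 df0; genf f0; tlia T.
  pose C (f : edge n.+1) := [&& f \in T, 0 < f.1, f.1 <= p & p.+1 < f.2].
  have Cf0 : C f0 by rewrite /C f0T.
  pose PX x := [exists f : edge n.+1, C f && (f.1 == x :> nat)].
  have exPX : exists x, PX x by exists f0.1; apply/existsP; exists f0; rewrite Cf0 eqxx.
  have bndX : forall x, PX x -> x <= n.
    by move=> x /existsP[f /andP[_ /eqP <-]]; exact: (ltn_ord f.1).
  case: (ex_minnP exPX) => x1 /existsP[g1 /andP[Cg1 /eqP gx1]] minx.
  pose PY y := [exists f : edge n.+1, [&& C f, f.1 == x1 :> nat & f.2 == y :> nat]].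
  have exPY : exists y, PY y by exists g1.2; apply/existsP; exists g1; rewrite Cg1 gx1 !eqxx.
  have bndY : forall y, PY y -> y <= n.
    by move=> y /existsP[f /and3P[_ _ /eqP <-]]; exact: (ltn_ord f.2).
  case: (ex_maxnP exPY bndY) => y1 /existsP[f1 /and3P[Cf1 /eqP fx1 /eqP fy1]] maxy.
  case/and4P: (Cf1) => f1T f1a f1b f1c.
  have hy1 : y1 <= n by rewrite -fy1; exact: (ltn_ord f1.2).
  have ok1 : (mk n 0 y1 \in T) || ~~ diagN n 0 y1.
    case: (boolP (mk n 0 y1 \in T)) => //= nin; apply/negP => dg.
    case: (key _ _ (leq0n n) hy1 dg nin) => g [gT cg].
    have dg' := dT g gT.
    have n1 := Tnc f1 g f1T gT. have n2 := Tnc g f1 gT f1T.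
    rewrite crossE in n1; rewrite crossE in n2.
    have : (0 < g.1 < x1) && (p.+1 < g.2) || (g.1 == x1 :> nat) && (y1 < g.2).
      move: cg dg' n1 n2 f1a f1b f1c; rewrite /diagN /crossN fx1 fy1 => cg dg' n1 n2 f1a f1b f1c.
      clear -cg dg' n1 n2 f1a f1b f1c; genf g; lia.
    case/orP => /andP[ga gb].
    - have : PX g.1 by apply/existsP; exists g; rewrite /C gT eqxx andbT /=; clear -ga gb f1b fx1; plia.
      by move/minx => h; clear -h ga; plia.
    - have : PY g.2 by apply/existsP; exists g; rewrite /C gT ga eqxx andbT /=; clear -ga gb f1a f1b f1c fx1 fy1; plia.
      by move/maxy => h; clear -h gb; plia.
  have hy1s : s < y1.
    rewrite ltnNge; apply/negP => hle.
    have iB : inB p s c 0 y1 by rewrite /inB; clear -hle f1c fy1; plia.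
    have := inBT 0 y1 (leq0n n) hy1 iB.
    case/orP: ok1 => [zT|nd]; first by rewrite zT.
    by move: nd; rewrite /diagN => nd; clear -nd hle hsn f1c fy1; plia.
  have hx1 : c < x1.
    rewrite ltnNge; apply/negP => hle.
    have := H f1 f1T; rewrite /inB => h; clear -h hle hy1s fx1 fy1 f1a; plia.
  case: (ex_maxnP exPX bndX) => x2 /existsP[g2 /andP[Cg2 /eqP gx2]] maxx.
  pose PY2 y := [exists f : edge n.+1, [&& C f, f.1 == x2 :> nat & f.2 == y :> nat]].
  have exPY2 : exists y, PY2 y by exists g2.2; apply/existsP; exists g2; rewrite Cg2 gx2 !eqxx.
  case: (ex_minnP exPY2) => y2 /existsP[f2 /and3P[Cf2 /eqP fx2 /eqP fy2]] miny.
  case/and4P: (Cf2) => f2T f2a f2b f2c.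
  have hy2 : y2 <= n by rewrite -fy2; exact: (ltn_ord f2.2).
  have x12 : x1 <= x2.
    by apply: maxx; apply/existsP; exists f1; rewrite Cf1 fx1 eqxx.
  have ok2 : (mk n p.+1 y2 \in T) || ~~ diagN n p.+1 y2.
    case: (boolP (mk n p.+1 y2 \in T)) => //= nin; apply/negP => dg.
    case: (key _ _ hp1 hy2 dg nin) => g [gT cg].
    have dg' := dT g gT.
    have n1 := Tnc f2 g f2T gT. have n2 := Tnc g f2 gT f2T.
    rewrite crossE in n1; rewrite crossE in n2.
    have : [&& 0 < g.1, g.1 <= p & p.+1 < g.2] &&
           ((x2 < g.1) || (g.1 == x2 :> nat) && (g.2 < y2)).
      move: cg dg' n1 n2 f2a f2b f2c; rewrite /diagN /crossN fx2 fy2 => cg dg' n1 n2 f2a f2b f2c.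
      clear -cg dg' n1 n2 f2a f2b f2c; genf g; lia.
    case/andP => Cg /orP[ga | /andP[ga gb]].
    - have : PX g.1 by apply/existsP; exists g; rewrite /C gT Cg eqxx.
      by move/maxx => h; clear -h ga; plia.
    - have : PY2 g.2 by apply/existsP; exists g; rewrite /C gT Cg ga eqxx.
      by move/miny => h; clear -h gb; plia.
  have hy2s : y2 <= s.
    rewrite leqNgt; apply/negP => hlt.
    have iB : inB p s c p.+1 y2 by rewrite /inB; clear -hlt; plia.
    have := inBT p.+1 y2 hp1 hy2 iB.
    case/orP: ok2 => [zT|nd]; first by rewrite zT.
    by move: nd; rewrite /diagN => nd; clear -nd hlt hps; plia.
  have := H f2 f2T; rewrite /inB => h; clear -h hx1 x12 fx2 fy2 f2b f2c hy2s; plia.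
Qed.


Lemma params N t : 5 <= N -> N - 2 <= t -> 8 * t + 11 <= N ^ 2 + 2 * N ->
  exists p s c, [/\ p.+2 <= s, s.+2 <= N, c <= p &
                    t = (c+1)*(N-1-s) + (p-c+1)*(s-p-1)].
Proof.
move=> h5 h1 h2.
pose U J := 2*J+1 + (N-3-2*J)*(J+1).
pose P J := [&& 0 < J, 2*J+3 <= N & t <= U J].
have exP : exists J, P J.
  exists ((N-1) %/ 4).
  have hJ := divn_eq (N-1) 4.
  have hr := ltn_pmod (N-1) (isT : 0 < 4).
  move: hJ hr; set J := (N-1) %/ 4; set r := (N-1) %% 4 => hJ hr.
  have eN : N = 4*J + r + 1 by lia.
  rewrite /P /U; apply/and3P; split; [lia | lia | ].
  rewrite eN in h2 *.
  case: r hr {hJ eN} h2 => [|[|[|[|r]]]] // _ h2; nia.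
case: (ex_minnP exP) => J /and3P[J0 J3 tU] minJ.
have [q eq] : exists q, N = q + 3 + 2*J by exists (N - 3 - 2*J); lia.
have tL : 2*J+1 + q*J <= t.
  case: (ltnP 1 J) => hJ.
  - have nP : ~~ P J.-1.
      apply/negP => /minJ; lia.
    have hJ1 : 0 < J.-1 by lia.
    have hJ2 : 2 * J.-1 + 3 <= N by lia.
    have : ~~ (t <= U J.-1) by move: nP; rewrite /P hJ1 hJ2.
    rewrite /U eq.
    have [K eK] : exists K, J = K.+2 by exists (J - 2); lia.
    rewrite eK /=.
    have -> : q + 3 + 2 * K.+2 - 3 - 2 * K.+1 = q + 2 by lia.
    move=> h; clear -h; nia.
  - have -> : J = 1 by lia.
    lia.
have tU' : t <= 2*J+1 + q*J + q.
  move: tU; rewrite /U eq.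
  have -> : q + 3 + 2 * J - 3 - 2 * J = q by lia.
  nia.
exists q, (q + 1 + J), (t - (2*J+1 + q*J)); split; try lia.
have -> : N - 1 - (q + 1 + J) = J + 1 by lia.
have -> : q + 1 + J - q - 1 = J by lia.
set c := t - _.
have hc : c <= q by lia.
have -> : q - c + 1 = (q + 1) - c by lia.
rewrite mulnBl. nia.
Qed.


Lemma card_cnt m (P : pred nat) : #|[set i : 'I_m | P i]| = count P (iota 0 m).
Proof.
rewrite cardsE cardE /enum_mem size_filter -[Finite.enum _]enumT -val_enum_ord count_map.
by apply: eq_count.
Qed.

Lemma cnt2 m l1 h1 l2 h2 : l1 <= h1 -> h1 <= l2 -> l2 <= h2 ->
  count (fun i => (l1 <= i < h1) || (l2 <= i < h2)) (iota 0 m) =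
  (minn h1 m - minn l1 m) + (minn h2 m - minn l2 m).
Proof.
move=> a b c; elim: m => [|m IH]; first by rewrite /=; lia.
rewrite -addn1 iotaD count_cat /= add0n IH. lia.
Qed.

Lemma card_Bs n p s c : p.+2 <= s -> s < n -> c <= p ->
  #|Bs n p s c| = (c+1)*(n-s) + (p-c+1)*(s-p-1).
Proof.
move=> hps hsn hcp.
pose U1 := [set i : 'I_n.+1 | (1 <= i < c.+1) || (p.+1 <= i < p.+2)].
pose W1 := [set i : 'I_n.+1 | (s.+1 <= i < n.+1) || (n.+1 <= i < n.+1)].
pose U2 := [set i : 'I_n.+1 | (0 <= i < 1) || (c.+1 <= i < p.+1)].
pose W2 := [set i : 'I_n.+1 | (p.+2 <= i < s.+1) || (s.+1 <= i < s.+1)].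
have eB : Bs n p s c = setX U1 W1 :|: setX U2 W2.
  apply/setP => -[a b]; rewrite !inE /inB /=.
  have := ltn_ord a; have := ltn_ord b.
  move: (nat_of_ord a) (nat_of_ord b) => x y hx hy.
  by apply/idP/idP => h; lia.
have e0 : setX U1 W1 :&: setX U2 W2 = set0.
  apply/setP => -[a b]; rewrite !inE /=.
  move: (nat_of_ord a) (nat_of_ord b) => x y.
  by apply/negP => h; lia.
have c1 : #|U1| = c + 1.
  by rewrite (card_cnt _ (fun i => (1 <= i < c.+1) || (p.+1 <= i < p.+2))) cnt2; lia.
have c2 : #|W1| = n - s.
  by rewrite (card_cnt _ (fun i => (s.+1 <= i < n.+1) || (n.+1 <= i < n.+1))) cnt2; lia.
have c3 : #|U2| = p - c + 1.
  by rewrite (card_cnt _ (fun i => (0 <= i < 1) || (c.+1 <= i < p.+1))) cnt2; lia.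
have c4 : #|W2| = s - p - 1.
  by rewrite (card_cnt _ (fun i => (p.+2 <= i < s.+1) || (s.+1 <= i < s.+1))) cnt2; lia.
by rewrite eB cardsU e0 cards0 subn0 !cardsX c1 c2 c3 c4.
Qed.

Unset Implicit Arguments.

(* t <= n^2/8 + n/4 - 11/8  <=>  8 t + 11 <= n^2 + 2 n *)
Theorem lemma3p3 (n t : nat) :
  (5 <= n)%N -> (n - 2 <= t)%N -> (8 * t + 11 <= n ^ 2 + 2 * n)%N ->
  exists B : {set edge n}, nt_blocker t B.
Proof.
move=> h5 ht1 ht2.
case: (params h5 ht1 ht2) => p [s [c [hps hsn hcp ->]]].
case: n h5 hsn ht1 ht2 => [//|n] h5 hsn _ _.
have hsn' : s < n by lia.
exists (Bs n p s c); split; first split.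
- split; [exact: Bs_diag | exact: Bs_blocker].
- exact: Bs_sat.
- rewrite card_Bs //.
  by have -> : n.+1 - 1 - s = n - s by lia.
Qed.
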